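(* Let $\delta > 0$ and $P > 0$, and let $\mathcal{X}$ be a $\delta$-spaced set of real numbers contained in $[-P,P]$. Let $I$ be a finite set, $\mathcal{Y} = \{y_i\}_{i \in I}$ a family of integers and $\{a_i\}_{i \in I}$ complex numbers. Then \[ \sum_{x \in \mathcal{X}} \Big| \sum_{i \in I} a_i e(x y_i) \Big|^2 \leq \pi \left( \mathrm{Card}(\mathcal{X})\, \Delta(\mathcal{Y}) + \frac{\mathrm{Card}(\mathcal{X})}{\delta} \right)^{1/2} (P+2)^{1/2} \, \sup_{k \in \mathbb{Z}} A_{\mathcal{Y}}(k)^{1/2} \, \|a\|^2 , \] where $\Delta(\mathcal{Y}) = \sup_{(i,j) \in I \times I} |y_i - y_j|$, $A_{\mathcal{Y}}(k)$ is the number of pairs $(i,j) \in I \times I$ with $y_i + y_j = k$, and $\|a\|^2 = \sum_{i \in I} |a_i|^2$.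
   Context: $e(z) = e^{2\pi i z}$. For $\delta > 0$, a $\delta$-spaced set of real numbers is a finite set $\mathcal{X}$ of distinct real numbers containing at least two elements such that $|x - x'| \geq \delta$ whenever $x, x'$ are distinct elements of $\mathcal{X}$. *)

(* Defs.v *)
From Stdlib Require Import Reals Lra Lia ZArith List.
Open Scope R_scope.

Definition Cpx := (R * R)%type.
Definition Cadd (z w : Cpx) : Cpx := (fst z + fst w, snd z + snd w).
Definition Cmul (z w : Cpx) : Cpx :=
  (fst z * fst w - snd z * snd w, fst z * snd w + snd z * fst w).
Definition C0 : Cpx := (0, 0).
Definition Cnorm2 (z : Cpx) : R := fst z ^ 2 + snd z ^ 2.

Definition e (t : R) : Cpx := (cos (2 * PI * t), sin (2 * PI * t)).

(* finite sums over the index set I = {0, ..., n-1} *)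
Definition Csum (n : nat) (f : nat -> Cpx) : Cpx :=
  fold_right (fun i acc => Cadd (f i) acc) C0 (seq 0 n).
Definition Rsum (n : nat) (f : nat -> R) : R :=
  fold_right (fun i acc => f i + acc) 0 (seq 0 n).
Definition Rsum_list (l : list R) (f : R -> R) : R :=
  fold_right (fun x acc => f x + acc) 0 l.

Definition delta_spaced (delta : R) (X : list R) : Prop :=
  NoDup X /\ (2 <= length X)%nat /\
  forall x x', In x X -> In x' X -> x <> x' -> delta <= Rabs (x - x').

Definition A_Y (n : nat) (y : nat -> Z) (k : Z) : nat :=
  length (filter (fun p => Z.eqb (y (fst p) + y (snd p))%Z k)
                 (list_prod (seq 0 n) (seq 0 n))).

Definition norm2 (n : nat) (a : nat -> Cpx) : R := Rsum n (fun i => Cnorm2 (a i)).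

(* Main.v *)
Require Import Defs.
From Stdlib Require Import Reals Lra Lia Psatz ZArith List Permutation Ratan Rtrigo_alt Factorial Setoid Morphisms.
Open Scope R_scope.

Definition RsumL {A : Type} (l : list A) (f : A -> R) : R :=
  fold_right (fun x acc => f x + acc) 0 l.
Definition CsumL {A : Type} (l : list A) (f : A -> Cpx) : Cpx :=
  fold_right (fun x acc => Cadd (f x) acc) C0 l.

Lemma RsumL_nil {A} (f : A -> R) : RsumL nil f = 0.
Proof. reflexivity. Qed.
Lemma RsumL_cons {A} (x : A) l f : RsumL (x :: l) f = f x + RsumL l f.
Proof. reflexivity. Qed.

Lemma RsumL_app {A} (l1 l2 : list A) f : RsumL (l1 ++ l2) f = RsumL l1 f + RsumL l2 f.
Proof. induction l1; simpl; [ring|]. unfold RsumL in *; simpl; rewrite IHl1; ring. Qed.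

Lemma RsumL_ext {A} (l : list A) f g : (forall x, In x l -> f x = g x) -> RsumL l f = RsumL l g.
Proof.
  induction l; intros H; [reflexivity|]. rewrite !RsumL_cons, H, IHl; auto.
  - intros; apply H; right; auto.
  - left; auto.
Qed.

Lemma RsumL_plus {A} (l : list A) f g : RsumL l (fun x => f x + g x) = RsumL l f + RsumL l g.
Proof. induction l; [simpl; unfold RsumL; simpl; ring|]. rewrite !RsumL_cons, IHl; ring. Qed.

Lemma RsumL_minus {A} (l : list A) f g : RsumL l (fun x => f x - g x) = RsumL l f - RsumL l g.
Proof. induction l; [simpl; unfold RsumL; simpl; ring|]. rewrite !RsumL_cons, IHl; ring. Qed.

Lemma RsumL_scal {A} (l : list A) c f : RsumL l (fun x => c * f x) = c * RsumL l f.
Proof. induction l; [unfold RsumL; simpl; ring|]. rewrite !RsumL_cons, IHl; ring. Qed.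

Lemma RsumL_scal_r {A} (l : list A) c f : RsumL l (fun x => f x * c) = RsumL l f * c.
Proof. induction l; [unfold RsumL; simpl; ring|]. rewrite !RsumL_cons, IHl; ring. Qed.

Lemma RsumL_le {A} (l : list A) f g : (forall x, In x l -> f x <= g x) -> RsumL l f <= RsumL l g.
Proof.
  induction l; intros H; [unfold RsumL; simpl; lra|]. rewrite !RsumL_cons.
  assert (f a <= g a) by (apply H; left; auto).
  assert (RsumL l f <= RsumL l g) by (apply IHl; intros; apply H; right; auto). lra.
Qed.

Lemma RsumL_nonneg {A} (l : list A) f : (forall x, In x l -> 0 <= f x) -> 0 <= RsumL l f.
Proof.
  intros H. replace 0 with (RsumL l (fun _ => 0)). apply RsumL_le; auto.
  induction l; [reflexivity|]. rewrite RsumL_cons, IHl; [ring|]. intros; apply H; right; auto.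
Qed.

Lemma RsumL_const {A} (l : list A) c : RsumL l (fun _ => c) = INR (length l) * c.
Proof.
  induction l; [unfold RsumL; simpl; ring|]. rewrite RsumL_cons, IHl.
  simpl length. rewrite S_INR. ring.
Qed.

Lemma RsumL_map {A B} (g : A -> B) (l : list A) f : RsumL (map g l) f = RsumL l (fun x => f (g x)).
Proof. induction l; [reflexivity|]. simpl map. rewrite !RsumL_cons, IHl; reflexivity. Qed.

Lemma RsumL_swap {A B} (l1 : list A) (l2 : list B) f :
  RsumL l1 (fun x => RsumL l2 (fun y => f x y)) = RsumL l2 (fun y => RsumL l1 (fun x => f x y)).
Proof.
  induction l1.
  - rewrite RsumL_nil. symmetry. induction l2; [reflexivity|]. rewrite RsumL_cons, IHl2.
    rewrite RsumL_nil; ring.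
  - rewrite RsumL_cons, IHl1. rewrite <- RsumL_plus. apply RsumL_ext. intros. reflexivity.
Qed.

Lemma RsumL_prod {A B} (l1 : list A) (l2 : list B) f :
  RsumL (list_prod l1 l2) f = RsumL l1 (fun x => RsumL l2 (fun y => f (x, y))).
Proof.
  induction l1; [reflexivity|]. simpl list_prod. rewrite RsumL_app, RsumL_map, IHl1.
  rewrite RsumL_cons. reflexivity.
Qed.

Lemma RsumL_perm {A} (l1 l2 : list A) f : Permutation l1 l2 -> RsumL l1 f = RsumL l2 f.
Proof.
  induction 1; try reflexivity.
  - rewrite !RsumL_cons, IHPermutation; reflexivity.
  - rewrite !RsumL_cons; ring.
  - congruence.
Qed.

Lemma RsumL_incl {A} (l1 l2 : list A) f :
  NoDup l1 -> incl l1 l2 -> (forall x, In x l2 -> 0 <= f x) -> RsumL l1 f <= RsumL l2 f.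
Proof.
  revert l2. induction l1 as [|a l1 IH]; intros l2 Hnd Hinc Hpos.
  - rewrite RsumL_nil. apply RsumL_nonneg; auto.
  - inversion Hnd; subst.
    assert (Ha : In a l2) by (apply Hinc; left; auto).
    destruct (in_split _ _ Ha) as [p [s Hps]]. subst l2.
    rewrite (RsumL_perm (p ++ a :: s) (a :: p ++ s)) by (symmetry; apply Permutation_middle).
    rewrite !RsumL_cons. apply Rplus_le_compat_l. apply IH; auto.
    + intros z Hz. assert (In z (p ++ a :: s)) by (apply Hinc; right; auto).
      apply in_app_or in H. apply in_or_app. destruct H as [H|[H|H]]; auto.
      subst; contradiction.
    + intros z Hz. apply Hpos. apply in_app_or in Hz. apply in_or_app. destruct Hz; auto. right; right; auto.
Qed.

Lemma RsumL_CS {A} (l : list A) f g :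
  (RsumL l (fun x => f x * g x))^2 <= RsumL l (fun x => f x ^ 2) * RsumL l (fun x => g x ^ 2).
Proof.
  set (a := RsumL l (fun x => f x ^ 2)). set (b := RsumL l (fun x => f x * g x)).
  set (c := RsumL l (fun x => g x ^ 2)).
  assert (Hq : forall t, 0 <= a - 2 * t * b + t ^ 2 * c).
  { intros t. assert (E : a - 2 * t * b + t ^ 2 * c = RsumL l (fun x => (f x - t * g x) ^ 2)).
    { unfold a, b, c. rewrite <- (RsumL_scal _ (2 * t)), <- (RsumL_scal _ (t^2)), <- RsumL_minus, <- RsumL_plus.
      apply RsumL_ext; intros; ring. }
    rewrite E. apply RsumL_nonneg. intros; apply pow2_ge_0. }
  assert (Ha : 0 <= a) by (unfold a; apply RsumL_nonneg; intros; apply pow2_ge_0).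
  assert (Hc : 0 <= c) by (unfold c; apply RsumL_nonneg; intros; apply pow2_ge_0).
  destruct (Rle_lt_dec c 0).
  - assert (c = 0) by lra. rewrite H in Hq.
    destruct (Req_dec b 0). rewrite H0; nra.
    exfalso. specialize (Hq ((a + 1) / (2 * b))).
    replace (a - 2 * ((a + 1) / (2 * b)) * b + ((a + 1) / (2 * b)) ^ 2 * 0) with (-1) in Hq by (field; auto). lra.
  - specialize (Hq (b / c)).
    replace (a - 2 * (b / c) * b + (b / c) ^ 2 * c) with (a - b^2 / c) in Hq by (field; lra).
    assert (b^2 / c <= a) by lra.
    apply (Rmult_le_compat_r c) in H; [|lra]. unfold Rdiv in H. rewrite Rmult_assoc, Rinv_l in H by lra. nra.
Qed.

Lemma fst_CsumL {A} (l : list A) f : fst (CsumL l f) = RsumL l (fun x => fst (f x)).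
Proof. induction l; [reflexivity|]. simpl. rewrite IHl. reflexivity. Qed.
Lemma snd_CsumL {A} (l : list A) f : snd (CsumL l f) = RsumL l (fun x => snd (f x)).
Proof. induction l; [reflexivity|]. simpl. rewrite IHl. reflexivity. Qed.

Lemma Cext (z w : Cpx) : fst z = fst w -> snd z = snd w -> z = w.
Proof. destruct z, w; simpl; intros; subst; reflexivity. Qed.
Definition Cconj (z : Cpx) : Cpx := (fst z, - snd z).
Definition dot (z w : Cpx) : R := fst z * fst w + snd z * snd w.
Definition Cabs (z : Cpx) : R := sqrt (Cnorm2 z).

Lemma Cnorm2_nonneg z : 0 <= Cnorm2 z.
Proof. unfold Cnorm2. nra. Qed.

Lemma Cnorm2_mul z w : Cnorm2 (Cmul z w) = Cnorm2 z * Cnorm2 w.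
Proof. destruct z, w; unfold Cnorm2, Cmul; simpl; ring. Qed.

Lemma Cnorm2_conj z : Cnorm2 (Cconj z) = Cnorm2 z.
Proof. destruct z; unfold Cnorm2, Cconj; simpl; ring. Qed.

Lemma Cnorm2_dot z : Cnorm2 z = dot z z.
Proof. destruct z; unfold Cnorm2, dot; simpl; ring. Qed.

Lemma dot_le z w : dot z w <= Cabs z * Cabs w.
Proof.
  destruct z as [a b], w as [c d]; unfold dot, Cabs, Cnorm2; cbn [fst snd].
  replace (a ^ 2 + b ^ 2) with (a² + b²) by (unfold Rsqr; ring).
  replace (c ^ 2 + d ^ 2) with (c² + d²) by (unfold Rsqr; ring).
  apply sqrt_cauchy.
Qed.

Lemma Cabs_nonneg z : 0 <= Cabs z.
Proof. apply sqrt_pos. Qed.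

Lemma Cabs_mul z w : Cabs (Cmul z w) = Cabs z * Cabs w.
Proof. unfold Cabs. rewrite Cnorm2_mul. apply sqrt_mult; apply Cnorm2_nonneg. Qed.

Lemma Cabs_sq z : Cabs z * Cabs z = Cnorm2 z.
Proof. unfold Cabs. apply sqrt_sqrt, Cnorm2_nonneg. Qed.

Lemma Cabs_conj z : Cabs (Cconj z) = Cabs z.
Proof. unfold Cabs; rewrite Cnorm2_conj; auto. Qed.

Lemma e_norm t : Cnorm2 (e t) = 1.
Proof. unfold Cnorm2, e; cbn [fst snd]. pose proof (sin2_cos2 (2 * PI * t)) as H. unfold Rsqr in H. lra. Qed.

Lemma Cabs_e t : Cabs (e t) = 1.
Proof. unfold Cabs; rewrite e_norm; apply sqrt_1. Qed.

Lemma e_mul a b : Cmul (e a) (e b) = e (a + b).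
Proof.
  unfold Cmul, e; simpl. replace (2 * PI * (a + b)) with (2 * PI * a + 2 * PI * b) by ring.
  rewrite cos_plus, sin_plus. f_equal; ring.
Qed.

Lemma dot_Cmul_e c c' a b : dot (Cmul c (e a)) (Cmul c' (e b)) = dot c (Cmul c' (e (b - a))).
Proof.
  unfold dot, Cmul, e; simpl. replace (2 * PI * (b - a)) with (2 * PI * b - 2 * PI * a) by ring.
  rewrite cos_minus, sin_minus. ring.
Qed.

Lemma dot_conj u b E : dot u (Cmul b E) = dot (Cconj b) (Cmul (Cconj u) E).
Proof. unfold dot, Cmul, Cconj; simpl. ring. Qed.

Lemma dot_CsumL_l {A} (l : list A) f w : dot (CsumL l f) w = RsumL l (fun x => dot (f x) w).
Proof.
  unfold dot. rewrite fst_CsumL, snd_CsumL, <- RsumL_scal_r, <- RsumL_scal_r, <- RsumL_plus. reflexivity.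
Qed.

Lemma dot_CsumL_r {A} (l : list A) f w : dot w (CsumL l f) = RsumL l (fun x => dot w (f x)).
Proof.
  unfold dot. rewrite fst_CsumL, snd_CsumL, <- RsumL_scal, <- RsumL_scal, <- RsumL_plus. reflexivity.
Qed.

Lemma Cmul_CsumL_r {A} (l : list A) f z : Cmul z (CsumL l f) = CsumL l (fun x => Cmul z (f x)).
Proof.
  apply Cext; unfold Cmul; simpl; rewrite ?fst_CsumL, ?snd_CsumL;
  rewrite <- !RsumL_scal; [rewrite <- RsumL_minus | rewrite <- RsumL_plus]; reflexivity.
Qed.

Lemma Cmul_CsumL_l {A} (l : list A) f z : Cmul (CsumL l f) z = CsumL l (fun x => Cmul (f x) z).
Proof.
  apply Cext; unfold Cmul; simpl; rewrite ?fst_CsumL, ?snd_CsumL;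
  rewrite <- !RsumL_scal_r; [rewrite <- RsumL_minus | rewrite <- RsumL_plus]; reflexivity.
Qed.

Lemma CsumL_ext {A} (l : list A) f g : (forall x, In x l -> f x = g x) -> CsumL l f = CsumL l g.
Proof.
  intros H; apply Cext; rewrite ?fst_CsumL, ?snd_CsumL; apply RsumL_ext; intros; rewrite H; auto.
Qed.

Lemma CsumL_prod {A B} (l1 : list A) (l2 : list B) f :
  CsumL (list_prod l1 l2) f = CsumL l1 (fun x => CsumL l2 (fun y => f (x, y))).
Proof.
  apply Cext; rewrite ?fst_CsumL, ?snd_CsumL, RsumL_prod; apply RsumL_ext; intros;
  rewrite ?fst_CsumL, ?snd_CsumL; reflexivity.
Qed.

Lemma CsumL_map {A B} (g : A -> B) (l : list A) f : CsumL (map g l) f = CsumL l (fun x => f (g x)).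
Proof. apply Cext; rewrite ?fst_CsumL, ?snd_CsumL, RsumL_map; reflexivity. Qed.

Lemma Cnorm2_CsumL {A} (l : list A) f :
  Cnorm2 (CsumL l f) = RsumL l (fun x => RsumL l (fun x' => dot (f x) (f x'))).
Proof.
  rewrite Cnorm2_dot, dot_CsumL_l. apply RsumL_ext; intros. apply dot_CsumL_r.
Qed.

Lemma Cnorm2_CsumL_unit {A} (l : list A) f :
  (forall x, In x l -> Cnorm2 (f x) = 1) -> Cnorm2 (CsumL l f) <= INR (length l) ^ 2.
Proof.
  intros H. unfold Cnorm2 at 1. rewrite fst_CsumL, snd_CsumL.
  pose proof (RsumL_CS l (fun _ => 1) (fun x => fst (f x))) as H1.
  pose proof (RsumL_CS l (fun _ => 1) (fun x => snd (f x))) as H2.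
  cbv beta in H1, H2.
  rewrite (RsumL_ext l (fun x => 1 * fst (f x)) (fun x => fst (f x))) in H1 by (intros; ring).
  rewrite (RsumL_ext l (fun x => 1 * snd (f x)) (fun x => snd (f x))) in H2 by (intros; ring).
  assert (E : RsumL l (fun x => fst (f x) ^ 2) + RsumL l (fun x => snd (f x) ^ 2) = INR (length l)).
  { rewrite <- RsumL_plus. rewrite (RsumL_ext _ _ (fun _ => 1)). rewrite RsumL_const; ring.
    intros; rewrite <- (H x H0); reflexivity. }
  rewrite RsumL_const in H1, H2.
  replace (1 ^ 2) with 1 in * by ring.
  assert (0 <= INR (length l)) by apply pos_INR.
  set (A1 := RsumL l (fun x => fst (f x))) in *. set (B1 := RsumL l (fun x => snd (f x))) in *.
  set (A2 := RsumL l (fun x => fst (f x) ^ 2)) in *. set (B2 := RsumL l (fun x => snd (f x) ^ 2)) in *.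
  set (L := INR (length l)) in *. rewrite Rmult_1_r in H1, H2.
  replace (L ^ 2) with (L * (A2 + B2)) by (rewrite E; ring). nra.
Qed.
Ltac factsimp := rewrite !INR_IZR_INZ;
  repeat match goal with |- context [Z.of_nat (fact ?n)] => let v := eval vm_compute in (Z.of_nat (fact n)) in change (Z.of_nat (fact n)) with v end.
Lemma cos_approx_3 a : cos_approx a 3 = 1 - a^2/2 + a^4/24 - a^6/720.
Proof. unfold cos_approx. cbn [sum_f_R0]. unfold cos_term. factsimp. cbn [Nat.mul Nat.add]. field. Qed.
Lemma cos_approx_4 a : cos_approx a 4 = 1 - a^2/2 + a^4/24 - a^6/720 + a^8/40320.
Proof. unfold cos_approx. cbn [sum_f_R0]. unfold cos_term. factsimp. cbn [Nat.mul Nat.add]. field. Qed.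
Lemma sin_lb_eq a : sin_lb a = a - a^3/6 + a^5/120 - a^7/5040.
Proof. unfold sin_lb, sin_approx. cbn [sum_f_R0]. unfold sin_term. factsimp. cbn [Nat.mul Nat.add]. field. Qed.
Lemma PI_gt3 : 3 < PI.
Proof.
  assert (H : 3/2 < PI/2). { apply PI2_lower_bound. lra.
  destruct (pre_cos_bound (3/2) 1) as [H _]; try lra. simpl (2*1+1)%nat in H. rewrite cos_approx_3 in H. lra. }
  lra.
Qed.
Lemma PI_lt : PI < 16/5.
Proof.
  destruct (Rlt_le_dec PI (16/5)); auto. exfalso.
  assert (0 <= cos (8/5)). { apply cos_ge_0; lra. }
  destruct (pre_cos_bound (8/5) 1) as [_ H1]; try lra. simpl (2*(1+1))%nat in H1. rewrite cos_approx_4 in H1. lra.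
Qed.

Definition q (t : R) : R := 2 - 2 * cos (2 * PI * t).

Lemma q_nonneg t : 0 <= q t.
Proof. unfold q. pose proof (COS_bound (2 * PI * t)). lra. Qed.

Lemma q_even t : q (- t) = q t.
Proof. unfold q. replace (2 * PI * - t) with (- (2 * PI * t)) by ring. rewrite cos_neg; auto. Qed.

Lemma q_period_nat t (k : nat) : q (t + INR k) = q t.
Proof. unfold q. replace (2 * PI * (t + INR k)) with (2 * PI * t + 2 * INR k * PI) by ring.
  rewrite cos_period; auto. Qed.

Lemma q_period t (j : Z) : q (t - IZR j) = q t.
Proof.
  destruct (Z_le_gt_dec 0 j).
  - rewrite <- (q_period_nat (t - IZR j) (Z.to_nat j)). rewrite INR_IZR_INZ, Z2Nat.id by lia.
    f_equal; ring.
  - rewrite <- (q_period_nat t (Z.to_nat (- j))). rewrite INR_IZR_INZ, Z2Nat.id by lia.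
    rewrite opp_IZR. f_equal; ring.
Qed.

Lemma q_lower_pos v : 0 <= v <= 1/2 -> 11 * v ^ 2 <= q v.
Proof.
  intros Hv. pose proof PI_gt3. pose proof PI_lt.
  unfold q. replace (2 * PI * v) with (2 * (PI * v)) by ring. rewrite cos_2a_sin.
  set (a := PI * v).
  assert (Ha : 0 <= a <= 8/5) by (unfold a; nra).
  destruct (SIN a) as [Hs _]; try lra. rewrite sin_lb_eq in Hs.
  assert (H1 : 4/7 * a <= sin a).
  { assert (a ^ 5 / 120 - a ^ 7 / 5040 >= 0).
    { replace (a ^ 5 / 120 - a ^ 7 / 5040) with (a^5 * (42 - a^2) / 5040) by field.
      apply Rle_ge, Rmult_le_pos; [|lra]. apply Rmult_le_pos; [apply pow_le; lra| nra]. }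
    assert (a - a ^ 3 / 6 >= 4/7 * a) by nra. lra. }
  assert (H2 : 16/49 * a^2 <= sin a * sin a) by nra.
  assert (Ea : a ^ 2 = PI^2 * v^2) by (unfold a; ring).
  assert (HP : 9 <= PI^2) by nra.
  assert (Hv2 : 0 <= v^2) by nra.
  assert (11 * v^2 <= 64/49 * (PI^2 * v^2)) by nra.
  lra.
Qed.

Lemma q_lower u : -1/2 <= u <= 1/2 -> 11 * u ^ 2 <= q u.
Proof.
  intros Hu. destruct (Rle_lt_dec 0 u).
  - apply q_lower_pos; lra.
  - rewrite <- q_even. replace (u ^ 2) with ((-u)^2) by ring. apply q_lower_pos; lra.
Qed.

Definition D (M : nat) (t : R) : Cpx := CsumL (seq 0 M) (fun l => e (t * INR l)).
Definition C1 : Cpx := (1, 0).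
Definition Csub (z w : Cpx) : Cpx := (fst z - fst w, snd z - snd w).

Lemma e_zero : e 0 = C1.
Proof. unfold e, C1. rewrite Rmult_0_r, cos_0, sin_0. reflexivity. Qed.

Lemma D_S M t : D (S M) t = Cadd C1 (Cmul (e t) (D M t)).
Proof.
  unfold D. rewrite <- cons_seq, <- seq_shift. cbn [CsumL fold_right].
  change (fold_right (fun x acc => Cadd (e (t * INR x)) acc) C0 (map S (seq 0 M)))
    with (CsumL (map S (seq 0 M)) (fun x => e (t * INR x))).
  rewrite CsumL_map, Cmul_CsumL_r. rewrite Rmult_0_r, e_zero. f_equal.
  apply CsumL_ext. intros. rewrite e_mul, S_INR. f_equal; ring.
Qed.

Lemma D_mul M t : Cmul (D M t) (Csub (e t) C1) = Csub (e (t * INR M)) C1.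
Proof.
  induction M.
  - unfold D; simpl. rewrite Rmult_0_r. unfold e, C1, Csub, Cmul, C0; simpl. rewrite Rmult_0_r, cos_0, sin_0.
    f_equal; ring.
  - rewrite D_S. rewrite S_INR.
    transitivity (Cadd (Csub (e t) C1) (Cmul (e t) (Cmul (D M t) (Csub (e t) C1)))).
    + destruct (D M t) as [d1 d2]. unfold Cadd, Cmul, Csub, C1, e; simpl. f_equal; ring.
    + rewrite IHM. replace (t * (INR M + 1)) with (t + t * INR M) by ring. rewrite <- e_mul.
      destruct (e t) as [e1 e2], (e (t * INR M)) as [f1 f2]. unfold Cadd, Cmul, Csub, C1; simpl. f_equal; ring.
Qed.

Lemma Cnorm2_esub t : Cnorm2 (Csub (e t) C1) = q t.
Proof. unfold Cnorm2, Csub, e, C1, q; cbn [fst snd]. pose proof (sin2_cos2 (2 * PI * t)). unfold Rsqr in H. nra. Qed.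

Lemma D_bound1 M t : Cnorm2 (D M t) <= INR M ^ 2.
Proof.
  unfold D. rewrite <- (length_seq M 0) at 2. apply Cnorm2_CsumL_unit. intros; apply e_norm.
Qed.

Lemma D_bound2 M t : Cnorm2 (D M t) * q t <= 4.
Proof.
  rewrite <- Cnorm2_esub, <- Cnorm2_mul, D_mul, Cnorm2_esub. unfold q.
  pose proof (COS_bound (2 * PI * (t * INR M))). lra.
Qed.
Definition zrange (a : Z) (n : nat) : list Z := map (fun i => (a + Z.of_nat i)%Z) (seq 0 n).

Lemma In_zrange a n z : In z (zrange a n) <-> (a <= z < a + Z.of_nat n)%Z.
Proof.
  unfold zrange. rewrite in_map_iff. split.
  - intros [i [Hi Hin]]. apply in_seq in Hin. lia.
  - intros H. exists (Z.to_nat (z - a)). split; [lia|]. apply in_seq. lia.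
Qed.

Lemma NoDup_zrange a n : NoDup (zrange a n).
Proof.
  unfold zrange. apply NoDup_map_NoDup_ForallPairs; [|apply seq_NoDup].
  intros i j _ _ H. lia.
Qed.

Lemma length_zrange a n : length (zrange a n) = n.
Proof. unfold zrange; rewrite length_map, length_seq; auto. Qed.

Fixpoint symlist (M : nat) : list Z :=
  match M with
  | O => 0%Z :: nil
  | S M' => Z.of_nat (S M') :: (- Z.of_nat (S M'))%Z :: symlist M'
  end.

Lemma In_symlist M z : (Z.abs z <= Z.of_nat M)%Z -> In z (symlist M).
Proof.
  induction M; intros H.
  - simpl. left. lia.
  - simpl. destruct (Z.eq_dec z (Z.of_nat (S M))). left; lia.
    destruct (Z.eq_dec z (- Z.of_nat (S M))). right; left; lia.
    right; right. apply IHM. lia.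
Qed.

Definition hm (A0 delta : R) (m : Z) : R :=
  if Z.eqb m 0 then A0 else 4 / (11 * ((IZR (Z.abs m) - 1/2) * delta) ^ 2).

Lemma hm_nonneg A0 delta m : 0 <= A0 -> 0 < delta -> 0 <= hm A0 delta m.
Proof.
  intros. unfold hm. destruct (Z.eqb_spec m 0); auto.
  assert (1 <= IZR (Z.abs m)) by (apply IZR_le; lia).
  assert (0 < (IZR (Z.abs m) - 1/2) * delta) by (apply Rmult_lt_0_compat; lra).
  apply Rlt_le, Rdiv_lt_0_compat; [lra|]. apply Rmult_lt_0_compat; [lra|]. apply pow_lt; auto.
Qed.

Lemma aux_ineq m : 0 <= m -> 4 / (2*m+1)^2 + 12*m/(2*m+1) <= 12*(m+1)/(2*m+3).
Proof.
  intros Hm.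
  assert (E : 4 / (2*m+1)^2 + 12*m/(2*m+1) - 12*(m+1)/(2*m+3) = - (16 * m / ((2*m+1)^2*(2*m+3)))).
  { field. lra. }
  assert (0 <= 16 * m / ((2*m+1)^2*(2*m+3))).
  { apply Rle_mult_inv_pos; [lra|]. apply Rmult_lt_0_compat; [|lra]. apply pow_lt; lra. }
  lra.
Qed.

Lemma sym_sum A0 delta M : 0 < delta ->
  RsumL (symlist M) (hm A0 delta) <= A0 + 8/(11*delta^2) * (12 * INR M / (2 * INR M + 1)).
Proof.
  intros Hd. induction M.
  - simpl. unfold RsumL, hm; simpl. lra.
  - change (symlist (S M)) with (Z.of_nat (S M) :: (- Z.of_nat (S M))%Z :: symlist M).
    rewrite !RsumL_cons.
    assert (Eh : forall z, z = Z.of_nat (S M) \/ z = (- Z.of_nat (S M))%Z ->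
                 hm A0 delta z = 8/(11*delta^2) * (2 / (2 * INR M + 1)^2)).
    { intros z Hz. unfold hm.
      assert (Z.eqb z 0 = false) by (apply Z.eqb_neq; lia). rewrite H.
      assert (Z.abs z = Z.of_nat (S M)) by lia. rewrite H0, <- INR_IZR_INZ, S_INR.
      assert (0 <= INR M) by apply pos_INR. field. split; lra. }
    rewrite (Eh (Z.of_nat (S M))) by auto. rewrite (Eh (- Z.of_nat (S M))%Z) by auto.
    rewrite S_INR. pose proof (pos_INR M).
    pose proof (aux_ineq (INR M) H).
    assert (0 < 8/(11*delta^2)) by (apply Rdiv_lt_0_compat; [lra|]; nra).
    replace (2 * (INR M + 1) + 1) with (2 * INR M + 3) by ring.
    set (K := 8/(11*delta^2)) in *.
    assert (K * (2 / (2 * INR M + 1) ^ 2) + K * (2 / (2 * INR M + 1) ^ 2) + K * (12 * INR M / (2 * INR M + 1))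
            <= K * (12 * (INR M + 1) / (2 * INR M + 3))).
    { replace (K * (2 / (2 * INR M + 1) ^ 2) + K * (2 / (2 * INR M + 1) ^ 2) + K * (12 * INR M / (2 * INR M + 1)))
        with (K * (4 / (2 * INR M + 1) ^ 2 + 12 * INR M / (2 * INR M + 1))) by (field; lra).
      apply Rmult_le_compat_l; lra. }
    lra.
Qed.

Lemma sym_sum' A0 delta M : 0 < delta ->
  RsumL (symlist M) (hm A0 delta) <= A0 + 48/(11*delta^2).
Proof.
  intros Hd. eapply Rle_trans; [apply sym_sum; auto|].
  pose proof (pos_INR M).
  assert (12 * INR M / (2 * INR M + 1) <= 6).
  { apply Rmult_le_reg_r with (2 * INR M + 1); [lra|]. unfold Rdiv. rewrite Rmult_assoc, Rinv_l by lra. lra. }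
  assert (0 < 8/(11*delta^2)) by (apply Rdiv_lt_0_compat; [lra|]; nra).
  assert (8/(11*delta^2) * (12 * INR M / (2 * INR M + 1)) <= 8/(11*delta^2) * 6) by (apply Rmult_le_compat_l; lra).
  replace (48/(11*delta^2)) with (8/(11*delta^2) * 6) by (field; lra). lra.
Qed.
Definition jf (t : R) : Z := Zfloor (t + 1/2).
Definition uf (t : R) : R := t - IZR (jf t).
Definition mf (delta t : R) : Z := Zfloor (uf t / delta + 1/2).

Lemma uf_range t : -1/2 <= uf t < 1/2.
Proof. unfold uf, jf. pose proof (Zfloor_bound (t + 1/2)). lra. Qed.

Lemma q_uf t : q (uf t) = q t.
Proof. unfold uf. apply q_period. Qed.

Lemma g_hm (g : R -> R) A0 delta t : 0 < delta ->
  (forall t, g t <= A0) -> (forall t, g t * q t <= 4) -> (forall t, 0 <= g t) ->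
  g t <= hm A0 delta (mf delta t).
Proof.
  intros Hd Hg1 Hg2 Hg0. unfold hm. destruct (Z.eqb_spec (mf delta t) 0); auto.
  set (m := mf delta t) in *. set (u := uf t).
  pose proof (uf_range t) as Hu. fold u in Hu.
  pose proof (Zfloor_bound (u / delta + 1/2)) as Hm. change (Zfloor (u / delta + 1/2)) with m in Hm.
  set (w := (IZR (Z.abs m) - 1/2) * delta).
  assert (Hw : 0 < w).
  { unfold w. assert (1 <= IZR (Z.abs m)) by (apply IZR_le; lia). apply Rmult_lt_0_compat; lra. }
  assert (Hwu : w ^ 2 <= u ^ 2).
  { destruct (Z_le_gt_dec 1 m).
    - assert (Z.abs m = m) by lia. unfold w; rewrite H.
      assert (IZR m - 1/2 <= u / delta) by lra.
      assert ((IZR m - 1/2) * delta <= u).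
      { apply Rmult_le_compat_r with (r := delta) in H0; [|lra]. unfold Rdiv in H0.
        rewrite Rmult_assoc, Rinv_l in H0 by lra. lra. }
      fold w in Hw. unfold w in Hw; rewrite H in Hw. nra.
    - assert (m <= -1)%Z by lia. assert (Z.abs m = - m)%Z by lia. unfold w; rewrite H0, opp_IZR.
      assert (u / delta < IZR m + 1/2) by lra.
      assert (u < (IZR m + 1/2) * delta).
      { apply Rmult_lt_compat_r with (r := delta) in H1; [|lra]. unfold Rdiv in H1.
        rewrite Rmult_assoc, Rinv_l in H1 by lra. lra. }
      assert (IZR m <= -1) by (apply IZR_le in H; exact H).
      assert (0 < (- IZR m - 1/2) * delta) by (apply Rmult_lt_0_compat; lra).
      nra. }
  assert (Hq : 11 * u ^ 2 <= q t) by (rewrite <- q_uf; apply q_lower; fold u; lra).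
  assert (Hqw : 0 < 11 * w ^ 2) by (apply Rmult_lt_0_compat; [lra| apply pow_lt; auto]).
  assert (11 * w ^ 2 <= q t) by lra.
  fold w. apply Rmult_le_reg_r with (11 * w ^ 2); auto.
  unfold Rdiv. rewrite Rmult_assoc, Rinv_l by lra. rewrite Rmult_1_r.
  specialize (Hg2 t). specialize (Hg0 t).
  apply Rle_trans with (g t * q t); auto. apply Rmult_le_compat_l; auto.
Qed.
Lemma count_row (delta P x A0 : R) (X : list R) (g : R -> R) :
  0 < delta -> 0 < P -> NoDup X ->
  (forall x1 x2, In x1 X -> In x2 X -> x1 <> x2 -> delta <= Rabs (x1 - x2)) ->
  (forall x', In x' X -> -P <= x' <= P) -> -P <= x <= P ->
  0 <= A0 ->
  (forall t, 0 <= g t) -> (forall t, g t <= A0) -> (forall t, g t * q t <= 4) ->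
  RsumL X (fun x' => g (x' - x)) <= (2*P+2) * (A0 + 48/(11*delta^2)).
Proof.
  intros Hd HP Hnd Hsp HX Hx HA0 Hg0 Hg1 Hg2.
  set (phi := fun x' => (jf (x' - x), mf delta (x' - x))).
  set (J0 := Zfloor (-P - x + 1/2)).
  set (J1 := Zfloor (P - x + 1/2)).
  assert (HJ : (J0 <= J1)%Z) by (apply Zfloor_le; lra).
  set (NJ := Z.to_nat (J1 - J0 + 1)).
  set (M0 := Z.to_nat (up (1/delta))).
  set (Js := zrange J0 NJ). set (Ms := symlist M0).
  assert (Hup := archimed (1/delta)).
  assert (H1d : 0 < 1/delta) by (apply Rdiv_lt_0_compat; lra).
  assert (Hup1 : (1 <= up (1/delta))%Z).
  { assert (0 < IZR (up (1/delta))) by lra. apply lt_IZR in H. lia. }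
  eapply Rle_trans.
  { apply RsumL_le. intros x' _. apply (g_hm g A0 delta (x' - x)); auto. }
  change (RsumL X (fun x' => hm A0 delta (mf delta (x' - x))))
    with (RsumL X (fun x' => (fun b => hm A0 delta (snd b)) (phi x'))).
  rewrite <- RsumL_map.
  eapply Rle_trans.
  { apply (RsumL_incl _ (list_prod Js Ms)).
    - apply NoDup_map_NoDup_ForallPairs; auto.
      intros x1 x2 Hx1 Hx2 Heq. unfold phi in Heq. injection Heq. intros Hm Hj.
      destruct (Req_dec x1 x2); auto. exfalso.
      specialize (Hsp x1 x2 Hx1 Hx2 H).
      pose proof (Zfloor_bound (uf (x1 - x) / delta + 1/2)) as B1.
      pose proof (Zfloor_bound (uf (x2 - x) / delta + 1/2)) as B2.
      unfold mf in Hm. rewrite Hm in B1.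
      assert (E : uf (x1 - x) - uf (x2 - x) = x1 - x2) by (unfold uf; rewrite Hj; ring).
      assert (Rabs (uf (x1 - x) / delta - uf (x2 - x) / delta) < 1) by (apply Rabs_def1; lra).
      replace (uf (x1 - x) / delta - uf (x2 - x) / delta) with ((x1 - x2) / delta) in H0
        by (rewrite <- E; field; lra).
      unfold Rdiv in H0. rewrite Rabs_mult, (Rabs_right (/ delta)) in H0
        by (apply Rle_ge, Rlt_le, Rinv_0_lt_compat; lra).
      apply Rmult_lt_compat_r with (r := delta) in H0; [|lra].
      rewrite Rmult_assoc, Rinv_l in H0 by lra. lra.
    - intros b Hb. apply in_map_iff in Hb. destruct Hb as [x' [Hb Hx']]. subst b.
      unfold phi. apply in_prod.
      + unfold Js. apply In_zrange. unfold NJ. rewrite Z2Nat.id by lia.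
        destruct (HX x' Hx').
        assert (J0 <= jf (x' - x))%Z by (apply Zfloor_le; lra).
        assert (jf (x' - x) <= J1)%Z by (apply Zfloor_le; lra). lia.
      + unfold Ms. apply In_symlist. unfold M0. rewrite Z2Nat.id by lia.
        pose proof (uf_range (x' - x)) as Hu.
        pose proof (Zfloor_bound (uf (x' - x) / delta + 1/2)) as Hm.
        change (Zfloor (uf (x' - x) / delta + 1/2)) with (mf delta (x' - x)) in Hm.
        assert (Hud : -1/2 * (1/delta) <= uf (x' - x) / delta <= 1/2 * (1/delta)).
        { unfold Rdiv. split; rewrite <- Rmult_assoc; apply Rmult_le_compat_r; try lra;
          apply Rlt_le, Rinv_0_lt_compat; lra. }
        assert (IZR (up (1/delta)) >= 1) by (apply Rle_ge; apply IZR_le; lia).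
        assert (IZR (mf delta (x' - x)) < IZR (up (1/delta))) by lra.
        assert (- IZR (up (1/delta)) < IZR (mf delta (x' - x))) by lra.
        apply lt_IZR in H0. rewrite <- opp_IZR in H1. apply lt_IZR in H1. lia.
    - intros b _. apply hm_nonneg; auto. }
  rewrite RsumL_prod. rewrite (RsumL_ext Js _ (fun _ => RsumL Ms (hm A0 delta))) by (intros; reflexivity).
  rewrite RsumL_const. unfold Js. rewrite length_zrange.
  assert (HNJ : INR NJ <= 2 * P + 2).
  { unfold NJ. rewrite INR_IZR_INZ, Z2Nat.id by lia. rewrite plus_IZR, minus_IZR.
    pose proof (Zfloor_bound (-P - x + 1/2)). pose proof (Zfloor_bound (P - x + 1/2)).
    fold J0 J1 in H, H0. lra. }
  assert (HS := sym_sum' A0 delta M0 Hd). fold Ms in HS.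
  assert (0 <= RsumL Ms (hm A0 delta)) by (apply RsumL_nonneg; intros; apply hm_nonneg; auto).
  apply Rle_trans with ((2 * P + 2) * RsumL Ms (hm A0 delta)).
  - apply Rmult_le_compat_r; auto.
  - apply Rmult_le_compat_l; lra.
Qed.
#[global] Instance RsumL_proper {A} (l : list A) : Proper (pointwise_relation A eq ==> eq) (RsumL l).
Proof. intros f g Hfg. apply RsumL_ext; intros; apply Hfg. Qed.
#[global] Instance CsumL_proper {A} (l : list A) : Proper (pointwise_relation A eq ==> eq) (CsumL l).
Proof. intros f g Hfg. apply CsumL_ext; intros; apply Hfg. Qed.

Definition Wf (X : list R) (c : R -> Cpx) (k : Z) : Cpx :=
  CsumL X (fun x => Cmul (c x) (e (x * IZR k))).
Definition win (lo : Z) (H L s : nat) : list Z := zrange (lo - Z.of_nat H + 1 + Z.of_nat s) L.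
Definition Gf (lo : Z) (H L : nat) (t : R) : Cpx :=
  CsumL (seq 0 H) (fun s => CsumL (win lo H L s) (fun k => e (t * IZR k))).

Lemma LS1 (X : list R) c lo (Rn H : nat) :
  INR H * RsumL (zrange lo (2 * Rn + 1)) (fun k => Cnorm2 (Wf X c k)) <=
  RsumL (seq 0 H) (fun s => RsumL (win lo H (2 * Rn + H) s) (fun k => Cnorm2 (Wf X c k))).
Proof.
  rewrite <- (length_seq H 0) at 1. rewrite <- RsumL_const.
  apply RsumL_le. intros s Hs. apply in_seq in Hs.
  apply RsumL_incl. apply NoDup_zrange.
  - intros k Hk. apply In_zrange in Hk. unfold win. apply In_zrange. lia.
  - intros; apply Cnorm2_nonneg.
Qed.

Lemma LS2 (X : list R) c lo (H L : nat) :
  RsumL (seq 0 H) (fun s => RsumL (win lo H L s) (fun k => Cnorm2 (Wf X c k))) =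
  RsumL X (fun x => RsumL X (fun x' => dot (c x) (Cmul (c x') (Gf lo H L (x' - x))))).
Proof.
  unfold Wf. setoid_rewrite Cnorm2_CsumL.
  setoid_rewrite dot_Cmul_e.
  unfold Gf. setoid_rewrite Cmul_CsumL_r. setoid_rewrite dot_CsumL_r.
  setoid_rewrite Cmul_CsumL_r. setoid_rewrite dot_CsumL_r.
  rewrite (RsumL_ext (seq 0 H) _ (fun s => RsumL X (fun x => RsumL (win lo H L s) (fun k => RsumL X
     (fun x' => dot (c x) (Cmul (c x') (e (x' * IZR k - x * IZR k)))))))).
  2:{ intros s _. apply (RsumL_swap (win lo H L s) X). }
  rewrite (RsumL_swap (seq 0 H) X). apply RsumL_ext; intros x _.
  rewrite (RsumL_ext (seq 0 H) _ (fun s => RsumL X (fun x' => RsumL (win lo H L s) (fun k =>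
     dot (c x) (Cmul (c x') (e (x' * IZR k - x * IZR k))))))).
  2:{ intros s _. apply (RsumL_swap (win lo H L s) X). }
  rewrite (RsumL_swap (seq 0 H) X). apply RsumL_ext; intros x' _.
  apply RsumL_ext; intros s _. apply RsumL_ext; intros k _. f_equal. f_equal. f_equal. ring.
Qed.
Lemma Gf_eq lo H L t :
  Gf lo H L t = Cmul (e (t * IZR (lo - Z.of_nat H + 1))) (Cmul (D H t) (D L t)).
Proof.
  unfold Gf, win, zrange, D. rewrite Cmul_CsumL_l, Cmul_CsumL_r. apply CsumL_ext; intros s _.
  rewrite CsumL_map, Cmul_CsumL_r, Cmul_CsumL_r. apply CsumL_ext; intros l _.
  rewrite !e_mul. f_equal. rewrite !plus_IZR, <- !INR_IZR_INZ. ring.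
Qed.

Lemma Gf_norm lo H L t : Cnorm2 (Gf lo H L t) = Cnorm2 (D H t) * Cnorm2 (D L t).
Proof. rewrite Gf_eq, !Cnorm2_mul, e_norm. ring. Qed.

Lemma Gf_bound1 lo H L t : Cabs (Gf lo H L t) <= INR H * INR L.
Proof.
  unfold Cabs. rewrite Gf_norm.
  pose proof (D_bound1 H t). pose proof (D_bound1 L t).
  pose proof (Cnorm2_nonneg (D H t)). pose proof (Cnorm2_nonneg (D L t)).
  pose proof (pos_INR H). pose proof (pos_INR L).
  rewrite <- (sqrt_pow2 (INR H * INR L)) by nra. apply sqrt_le_1_alt.
  replace ((INR H * INR L) ^ 2) with (INR H ^ 2 * INR L ^ 2) by ring.
  apply Rmult_le_compat; auto.
Qed.

Lemma Gf_bound2 lo H L t : Cabs (Gf lo H L t) * q t <= 4.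
Proof.
  unfold Cabs. rewrite Gf_norm.
  pose proof (D_bound2 H t). pose proof (D_bound2 L t).
  pose proof (Cnorm2_nonneg (D H t)). pose proof (Cnorm2_nonneg (D L t)). pose proof (q_nonneg t).
  rewrite <- (sqrt_pow2 (q t)) by auto. rewrite <- sqrt_mult by nra.
  rewrite <- (sqrt_pow2 4) by lra. apply sqrt_le_1_alt.
  replace (Cnorm2 (D H t) * Cnorm2 (D L t) * q t ^ 2) with ((Cnorm2 (D H t) * q t) * (Cnorm2 (D L t) * q t)) by ring.
  replace (4 ^ 2) with (4 * 4) by ring.
  apply Rmult_le_compat; auto; apply Rmult_le_pos; auto.
Qed.

Lemma LS3 (X : list R) (c : R -> Cpx) (g : R -> R) (F : R -> Cpx) Row :
  (forall t, Cabs (F t) <= g t) ->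
  (forall x, In x X -> RsumL X (fun x' => g (x' - x)) <= Row) ->
  (forall x', In x' X -> RsumL X (fun x => g (x' - x)) <= Row) ->
  RsumL X (fun x => RsumL X (fun x' => dot (c x) (Cmul (c x') (F (x' - x))))) <=
  Row * RsumL X (fun x => Cnorm2 (c x)).
Proof.
  intros HF H1 H2.
  assert (Hg0 : forall t, 0 <= g t) by (intros t; eapply Rle_trans; [apply Cabs_nonneg|apply HF]).
  apply Rle_trans with (RsumL X (fun x => RsumL X (fun x' =>
     Cnorm2 (c x) * g (x' - x) / 2 + Cnorm2 (c x') * g (x' - x) / 2))).
  { apply RsumL_le; intros x _; apply RsumL_le; intros x' _.
    eapply Rle_trans; [apply dot_le|]. rewrite Cabs_mul.
    pose proof (Cabs_nonneg (c x)) as N1. pose proof (Cabs_nonneg (c x')) as N2. pose proof (HF (x' - x)) as N3.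
    pose proof (Cabs_sq (c x)) as S1. pose proof (Cabs_sq (c x')) as S2. pose proof (Hg0 (x' - x)) as N4.
    apply Rle_trans with (Cabs (c x) * Cabs (c x') * g (x' - x)).
    - rewrite <- Rmult_assoc. apply Rmult_le_compat_l; auto. apply Rmult_le_pos; auto.
    - rewrite <- S1, <- S2. assert (0 <= (Cabs (c x) - Cabs (c x'))^2 * g (x' - x)) by (apply Rmult_le_pos; auto; apply pow2_ge_0).
      nra. }
  setoid_rewrite RsumL_plus. rewrite RsumL_plus.
  rewrite (RsumL_swap X X (fun x x' => Cnorm2 (c x') * g (x' - x) / 2)).
  assert (A1 : RsumL X (fun x => RsumL X (fun x' => Cnorm2 (c x) * g (x' - x) / 2)) <=
               Row / 2 * RsumL X (fun x => Cnorm2 (c x))).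
  { rewrite <- RsumL_scal. apply RsumL_le; intros x Hx.
    rewrite (RsumL_ext _ _ (fun x' => Cnorm2 (c x) / 2 * g (x' - x))) by (intros; unfold Rdiv; ring).
    rewrite RsumL_scal. pose proof (H1 x Hx). pose proof (Cnorm2_nonneg (c x)).
    apply Rle_trans with (Cnorm2 (c x) / 2 * Row). apply Rmult_le_compat_l; lra. lra. }
  assert (A2 : RsumL X (fun x' => RsumL X (fun x => Cnorm2 (c x') * g (x' - x) / 2)) <=
               Row / 2 * RsumL X (fun x => Cnorm2 (c x))).
  { rewrite <- RsumL_scal. apply RsumL_le; intros x' Hx.
    rewrite (RsumL_ext _ _ (fun x => Cnorm2 (c x') / 2 * g (x' - x))) by (intros; unfold Rdiv; ring).
    rewrite RsumL_scal. pose proof (H2 x' Hx). pose proof (Cnorm2_nonneg (c x')).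
    apply Rle_trans with (Cnorm2 (c x') / 2 * Row). apply Rmult_le_compat_l; lra. lra. }
  replace (RsumL X (fun x => fst (c x)^2) + RsumL X (fun x => snd (c x)^2))
    with (RsumL X (fun x => Cnorm2 (c x))) by (rewrite <- RsumL_plus; reflexivity).
  lra.
Qed.
Lemma LS (delta P : R) (X : list R) (c : R -> Cpx) (lo : Z) (Rn H : nat) :
  0 < delta -> 0 < P -> NoDup X ->
  (forall x1 x2, In x1 X -> In x2 X -> x1 <> x2 -> delta <= Rabs (x1 - x2)) ->
  (forall x', In x' X -> -P <= x' <= P) ->
  INR H * RsumL (zrange lo (2 * Rn + 1)) (fun k => Cnorm2 (Wf X c k)) <=
  (2*P+2) * (INR H * INR (2 * Rn + H) + 48/(11*delta^2)) * RsumL X (fun x => Cnorm2 (c x)).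
Proof.
  intros Hd HP Hnd Hsp HX.
  eapply Rle_trans; [apply LS1|]. rewrite LS2.
  set (L := (2 * Rn + H)%nat).
  set (g := fun t => Cabs (Gf lo H L t)).
  assert (HA0 : 0 <= INR H * INR L) by (apply Rmult_le_pos; apply pos_INR).
  apply (LS3 X c g).
  - intros; unfold g; lra.
  - intros x Hx. apply count_row; auto.
    + intros; apply Cabs_nonneg.
    + intros; apply Gf_bound1.
    + intros; apply Gf_bound2.
  - intros x' Hx'.
    rewrite (RsumL_ext X _ (fun x => (fun s => g (- s)) (x - x'))) by (intros; cbv beta; f_equal; ring).
    apply (count_row delta P x' (INR H * INR L) X (fun s => g (- s))); auto.
    + intros; apply Cabs_nonneg.
    + intros; apply Gf_bound1.
    + intros t. rewrite <- q_even. apply Gf_bound2.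
Qed.
Lemma sum_indicator (K : list Z) (z : Z) (f : Z -> R) :
  NoDup K -> In z K -> RsumL K (fun k => (if Z.eqb z k then 1 else 0) * f k) = f z.
Proof.
  induction K as [|k K IH]; intros Hnd Hin; [destruct Hin|].
  inversion Hnd; subst. rewrite RsumL_cons.
  destruct (Z.eqb_spec z k).
  - subst. rewrite (RsumL_ext K _ (fun _ => 0)). rewrite RsumL_const. ring.
    intros k' Hk'. destruct (Z.eqb_spec k k'); [subst; contradiction|ring].
  - destruct Hin as [Hin|Hin]; [subst; congruence|]. rewrite IH; auto. ring.
Qed.

Lemma count_sum {A} (l : list A) (z : A -> Z) (K : list Z) (f : Z -> R) :
  NoDup K -> (forall p, In p l -> In (z p) K) ->
  RsumL l (fun p => f (z p)) =
  RsumL K (fun k => INR (length (filter (fun p => Z.eqb (z p) k) l)) * f k).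
Proof.
  intros HK. induction l as [|p l IH]; intros Hin.
  - rewrite RsumL_nil. rewrite (RsumL_ext K _ (fun _ => 0)). rewrite RsumL_const; ring.
    intros; simpl; ring.
  - rewrite RsumL_cons. rewrite IH by (intros; apply Hin; right; auto).
    rewrite <- (sum_indicator K (z p) f HK) by (apply Hin; left; auto).
    rewrite <- RsumL_plus. apply RsumL_ext. intros k _. simpl filter.
    destruct (Z.eqb (z p) k); simpl length; rewrite ?S_INR; ring.
Qed.

Lemma argmin (y : nat -> Z) (n : nat) : (1 <= n)%nat ->
  exists i0, (i0 < n)%nat /\ forall i, (i < n)%nat -> (y i0 <= y i)%Z.
Proof.
  induction n; intros Hn; [lia|]. destruct (Nat.eq_dec n 0).
  - subst. exists 0%nat. split; [lia|]. intros i Hi. assert (i = 0%nat) by lia. subst; lia.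
  - destruct IHn as [i0 [Hi0 Hm]]; [lia|].
    destruct (Z_le_gt_dec (y i0) (y n)).
    + exists i0. split; [lia|]. intros i Hi. destruct (Nat.eq_dec i n); [subst; auto|]. apply Hm; lia.
    + exists n. split; [lia|]. intros i Hi. destruct (Nat.eq_dec i n); [subst; lia|].
      specialize (Hm i ltac:(lia)). lia.
Qed.

Lemma argmax (y : nat -> Z) (n : nat) : (1 <= n)%nat ->
  exists i1, (i1 < n)%nat /\ forall i, (i < n)%nat -> (y i <= y i1)%Z.
Proof.
  intros Hn. destruct (argmin (fun i => (- y i)%Z) n Hn) as [i1 [H1 H2]].
  exists i1. split; auto. intros i Hi. specialize (H2 i Hi). lia.
Qed.

Lemma count_points (delta P : R) (X : list R) :
  0 < delta -> 0 < P -> NoDup X ->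
  (forall x1 x2, In x1 X -> In x2 X -> x1 <> x2 -> delta <= Rabs (x1 - x2)) ->
  (forall x', In x' X -> -P <= x' <= P) ->
  INR (length X) <= 2 * P / delta + 1.
Proof.
  intros Hd HP Hnd Hsp HX.
  set (phi := fun x => Zfloor ((x + P) / delta)).
  set (K := Zfloor (2 * P / delta)).
  assert (HK0 : (0 <= K)%Z).
  { apply Zfloor_lub. apply Rle_mult_inv_pos; lra. }
  assert (Hle : (length (map phi X) <= length (zrange 0 (Z.to_nat (K + 1))))%nat).
  { apply NoDup_incl_length.
    - apply NoDup_map_NoDup_ForallPairs; auto.
      intros x1 x2 Hx1 Hx2 Heq. destruct (Req_dec x1 x2); auto. exfalso.
      specialize (Hsp x1 x2 Hx1 Hx2 H). unfold phi in Heq.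
      pose proof (Zfloor_bound ((x1 + P) / delta)). pose proof (Zfloor_bound ((x2 + P) / delta)).
      rewrite Heq in H0.
      assert (Rabs ((x1 + P) / delta - (x2 + P) / delta) < 1) by (apply Rabs_def1; lra).
      replace ((x1 + P) / delta - (x2 + P) / delta) with ((x1 - x2) / delta) in H2 by (field; lra).
      unfold Rdiv in H2. rewrite Rabs_mult, (Rabs_right (/ delta)) in H2
        by (apply Rle_ge, Rlt_le, Rinv_0_lt_compat; lra).
      apply Rmult_lt_compat_r with (r := delta) in H2; [|lra].
      rewrite Rmult_assoc, Rinv_l in H2 by lra. lra.
    - intros b Hb. apply in_map_iff in Hb. destruct Hb as [x [Hb Hx]]. subst b.
      apply In_zrange. rewrite Z2Nat.id by lia. destruct (HX x Hx). unfold phi.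
      assert (0 <= Zfloor ((x + P) / delta))%Z.
      { apply Zfloor_lub. apply Rle_mult_inv_pos; lra. }
      assert (Zfloor ((x + P) / delta) <= K)%Z.
      { apply Zfloor_le. unfold Rdiv. apply Rmult_le_compat_r; [apply Rlt_le, Rinv_0_lt_compat; lra| lra]. }
      lia. }
  rewrite length_map, length_zrange in Hle. apply le_INR in Hle.
  rewrite (INR_IZR_INZ (Z.to_nat (K + 1))), Z2Nat.id, plus_IZR in Hle by lia.
  pose proof (Zfloor_bound (2 * P / delta)). fold K in H. lra.
Qed.
Definition Sf (n : nat) (a : nat -> Cpx) (y : nat -> Z) (x : R) : Cpx :=
  Csum n (fun i => Cmul (a i) (e (x * IZR (y i)))).
Definition PL (n : nat) : list (nat * nat) := list_prod (seq 0 n) (seq 0 n).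
Definition beta (a : nat -> Cpx) (p : nat * nat) : Cpx := Cmul (a (fst p)) (a (snd p)).
Definition zp (y : nat -> Z) (p : nat * nat) : Z := (y (fst p) + y (snd p))%Z.
Definition Uf n a y x : Cpx := Cmul (Sf n a y x) (Sf n a y x).

Lemma U_expand n a y x :
  Uf n a y x = CsumL (PL n) (fun p => Cmul (beta a p) (e (x * IZR (zp y p)))).
Proof.
  unfold Uf, Sf, Csum, PL. change (fold_right (fun i acc => Cadd (Cmul (a i) (e (x * IZR (y i)))) acc) C0 (seq 0 n))
    with (CsumL (seq 0 n) (fun i => Cmul (a i) (e (x * IZR (y i))))).
  rewrite Cmul_CsumL_l, CsumL_prod. apply CsumL_ext; intros i _. rewrite Cmul_CsumL_r.
  apply CsumL_ext; intros j _. unfold beta, zp; cbn [fst snd].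
  rewrite plus_IZR, Rmult_plus_distr_l, <- e_mul.
  destruct (a i), (a j), (e (x * IZR (y i))), (e (x * IZR (y j))). unfold Cmul; cbn [fst snd]. f_equal; ring.
Qed.

Lemma norm2_eq n a : norm2 n a = RsumL (seq 0 n) (fun i => Cnorm2 (a i)).
Proof. reflexivity. Qed.

Lemma beta_sum n a : RsumL (PL n) (fun p => Cnorm2 (beta a p)) = (norm2 n a) ^ 2.
Proof.
  unfold PL. rewrite RsumL_prod, norm2_eq. unfold beta; cbn [fst snd].
  setoid_rewrite Cnorm2_mul. setoid_rewrite RsumL_scal. rewrite RsumL_scal_r. ring.
Qed.

Lemma key_Q (delta P supA : R) (X : list R) (n : nat) (y : nat -> Z) (a : nat -> Cpx) (lo : Z) (Rn H : nat) :
  0 < delta -> 0 < P -> NoDup X ->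
  (forall x1 x2, In x1 X -> In x2 X -> x1 <> x2 -> delta <= Rabs (x1 - x2)) ->
  (forall x', In x' X -> -P <= x' <= P) ->
  (forall i j, (i < n)%nat -> (j < n)%nat -> (lo <= y i + y j <= lo + 2 * Z.of_nat Rn)%Z) ->
  (forall k, INR (A_Y n y k) <= supA) -> 0 <= supA -> (1 <= H)%nat ->
  RsumL X (fun x => Cnorm2 (Uf n a y x)) <=
  (norm2 n a) ^ 2 * supA * ((2*P+2) * (INR (2 * Rn + H) + 48/(11*delta^2) / INR H)).
Proof.
  intros Hd HP Hnd Hsp HX Hy HA HsA HH.
  set (Q := RsumL X (fun x => Cnorm2 (Uf n a y x))).
  set (c := fun x => Cconj (Uf n a y x)).
  set (W := Wf X c).
  set (plat := zrange lo (2 * Rn + 1)).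
  assert (HQ0 : 0 <= Q) by (apply RsumL_nonneg; intros; apply Cnorm2_nonneg).
  assert (HB : Q <= RsumL (PL n) (fun p => Cabs (beta a p) * Cabs (W (zp y p)))).
  { apply Rle_trans with (RsumL (PL n) (fun p => dot (Cconj (beta a p)) (W (zp y p)))).
    - right. unfold Q. rewrite (RsumL_ext X _ (fun x => RsumL (PL n) (fun p =>
         dot (Cconj (beta a p)) (Cmul (c x) (e (x * IZR (zp y p))))))).
      + rewrite RsumL_swap. apply RsumL_ext; intros p _. unfold W, Wf. rewrite dot_CsumL_r. reflexivity.
      + intros x _. rewrite Cnorm2_dot. rewrite (U_expand n a y x) at 2. rewrite dot_CsumL_r.
        apply RsumL_ext; intros p _. rewrite dot_conj. reflexivity.
    - apply RsumL_le; intros p _. eapply Rle_trans; [apply dot_le|]. rewrite Cabs_conj. lra. }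
  assert (HC : Q ^ 2 <= (norm2 n a) ^ 2 * RsumL (PL n) (fun p => Cnorm2 (W (zp y p)))).
  { pose proof (RsumL_CS (PL n) (fun p => Cabs (beta a p)) (fun p => Cabs (W (zp y p)))) as HCS.
    cbv beta in HCS.
    rewrite (RsumL_ext _ (fun x => Cabs (beta a x) ^ 2) (fun p => Cnorm2 (beta a p))) in HCS
      by (intros; rewrite <- Cabs_sq; ring).
    rewrite (RsumL_ext _ (fun x => Cabs (W (zp y x)) ^ 2) (fun p => Cnorm2 (W (zp y p)))) in HCS
      by (intros; rewrite <- Cabs_sq; ring).
    rewrite beta_sum in HCS.
    assert (Q ^ 2 <= (RsumL (PL n) (fun p => Cabs (beta a p) * Cabs (W (zp y p)))) ^ 2).
    { apply pow_incr; auto. }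
    lra. }
  assert (HD : RsumL (PL n) (fun p => Cnorm2 (W (zp y p))) <= supA * RsumL plat (fun k => Cnorm2 (W k))).
  { rewrite (count_sum (PL n) (zp y) plat (fun k => Cnorm2 (W k))).
    - rewrite <- RsumL_scal. apply RsumL_le; intros k _. apply Rmult_le_compat_r; [apply Cnorm2_nonneg|].
      apply HA.
    - apply NoDup_zrange.
    - intros [pi pj] Hp. unfold PL in Hp. apply in_prod_iff in Hp. destruct Hp as [Hi Hj]. cbn [fst snd].
      apply in_seq in Hi, Hj. unfold plat. apply In_zrange. unfold zp.
      specialize (Hy pi pj ltac:(lia) ltac:(lia)). cbn [fst snd]. lia. }
  assert (HE := LS delta P X c lo Rn H Hd HP Hnd Hsp HX). fold plat in HE.
  change (Wf X c) with W in HE.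
  rewrite (RsumL_ext X (fun x => Cnorm2 (c x)) (fun x => Cnorm2 (Uf n a y x))) in HE
    by (intros; unfold c; apply Cnorm2_conj). fold Q in HE.
  assert (HHp : 0 < INR H) by (apply lt_0_INR; lia).
  set (SP := RsumL plat (fun k => Cnorm2 (W k))) in *.
  set (Lam := (2*P+2) * (INR (2 * Rn + H) + 48/(11*delta^2) / INR H)).
  assert (HSP : SP <= Lam * Q).
  { apply Rmult_le_reg_l with (INR H); auto. eapply Rle_trans; [apply HE|]. unfold Lam.
    right. field. lra. }
  assert (HN0 : 0 <= norm2 n a) by (rewrite norm2_eq; apply RsumL_nonneg; intros; apply Cnorm2_nonneg).
  assert (Q ^ 2 <= (norm2 n a) ^ 2 * supA * Lam * Q).
  { eapply Rle_trans; [apply HC|].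
    replace ((norm2 n a) ^ 2 * supA * Lam * Q) with ((norm2 n a) ^ 2 * (supA * (Lam * Q))) by ring.
    apply Rmult_le_compat_l; [apply pow2_ge_0|]. eapply Rle_trans; [apply HD|].
    apply Rmult_le_compat_l; auto. }
  destruct (Req_dec Q 0) as [HQ|HQ].
  - rewrite HQ. assert (0 <= Lam).
    { unfold Lam. apply Rmult_le_pos; [lra|]. apply Rplus_le_le_0_compat; [apply pos_INR|].
      apply Rle_mult_inv_pos; [|auto]. apply Rle_mult_inv_pos; [lra|]. nra. }
    apply Rmult_le_pos; auto. apply Rmult_le_pos; auto. apply pow2_ge_0.
  - apply Rmult_le_reg_r with Q; [lra|]. nra.
Qed.
Lemma sq_le a b : 0 <= b -> a ^ 2 <= b ^ 2 -> a <= b.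
Proof. intros. destruct (Rle_lt_dec a b); auto. nra. Qed.

Lemma Cnorm2_CsumL_le {A} (l : list A) f :
  Cnorm2 (CsumL l f) <= INR (length l) * RsumL l (fun x => Cnorm2 (f x)).
Proof.
  unfold Cnorm2 at 1. rewrite fst_CsumL, snd_CsumL.
  pose proof (RsumL_CS l (fun _ => 1) (fun x => fst (f x))) as H1.
  pose proof (RsumL_CS l (fun _ => 1) (fun x => snd (f x))) as H2.
  cbv beta in H1, H2.
  rewrite (RsumL_ext l (fun x => 1 * fst (f x)) (fun x => fst (f x))) in H1 by (intros; ring).
  rewrite (RsumL_ext l (fun x => 1 * snd (f x)) (fun x => snd (f x))) in H2 by (intros; ring).
  rewrite RsumL_const in H1, H2. replace (1 ^ 2) with 1 in * by ring. rewrite Rmult_1_r in H1, H2.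
  unfold Cnorm2. rewrite RsumL_plus. lra.
Qed.

Lemma filter_all {A} (f : A -> bool) l : (forall p, In p l -> f p = true) -> filter f l = l.
Proof.
  induction l; intros H; auto. simpl. rewrite H by (left; auto). f_equal. apply IHl. intros; apply H; right; auto.
Qed.

Lemma Sf_eq n a y x : Rsum_list nil (fun _ => 0) = 0 -> Sf n a y x = CsumL (seq 0 n) (fun i => Cmul (a i) (e (x * IZR (y i)))).
Proof. reflexivity. Qed.
Theorem theorem1 (delta P : R) (X : list R) (n : nat) (y : nat -> Z) (a : nat -> Cpx)
  (Delta supA : R) :
  0 < delta -> 0 < P ->
  delta_spaced delta X ->
  (forall x, In x X -> -P <= x <= P) ->
  is_lub (fun r => exists i j, (i < n)%nat /\ (j < n)%nat /\ r = Rabs (IZR (y i - y j))) Delta ->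
  is_lub (fun r => exists k : Z, r = INR (A_Y n y k)) supA ->
  Rsum_list X (fun x => Cnorm2 (Csum n (fun i => Cmul (a i) (e (x * IZR (y i)))))) <=
  PI * sqrt (INR (length X) * Delta + INR (length X) / delta) * sqrt (P + 2)
     * sqrt supA * norm2 n a.
Proof.
  intros Hd HP [Hnd [Hlen Hsp]] HX [HDub _] [HAub _].
  change (Rsum_list X (fun x => Cnorm2 (Csum n (fun i => Cmul (a i) (e (x * IZR (y i)))))))
    with (RsumL X (fun x => Cnorm2 (Sf n a y x))).
  set (LHS := RsumL X (fun x => Cnorm2 (Sf n a y x))).
  set (N := INR (length X)).
  set (Na := norm2 n a).
  assert (HNa : 0 <= Na) by (unfold Na; rewrite norm2_eq; apply RsumL_nonneg; intros; apply Cnorm2_nonneg).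
  assert (HLHS : 0 <= LHS) by (apply RsumL_nonneg; intros; apply Cnorm2_nonneg).
  assert (HA : forall k, INR (A_Y n y k) <= supA) by (intros k; apply HAub; exists k; auto).
  assert (HsA : 0 <= supA) by (eapply Rle_trans; [apply pos_INR|apply (HA 0%Z)]).
  assert (HN : 0 <= N) by apply pos_INR.
  pose proof PI_gt3 as Hpi.
  assert (Hd2P : delta <= 2 * P).
  { destruct X as [|x1 [|x2 X']]; simpl in Hlen; try lia.
    inversion Hnd; subst. assert (x1 <> x2) by (intro; subst; apply H1; left; auto).
    specialize (Hsp x1 x2 ltac:(left; auto) ltac:(right; left; auto) H).
    pose proof (HX x1 ltac:(left; auto)). pose proof (HX x2 ltac:(right; left; auto)).
    apply Rle_trans with (1 := Hsp). apply Rabs_le. lra. }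
  destruct (Nat.eq_dec n 0) as [Hn0|Hn0].
  {
    subst n. assert (LHS = 0).
    { unfold LHS. rewrite (RsumL_ext X _ (fun _ => 0)). rewrite RsumL_const; ring.
      intros. unfold Sf, Csum, Cnorm2; simpl; ring. }
    rewrite H. unfold Na. change (norm2 0 a) with 0. rewrite Rmult_0_r. lra. }
  destruct (argmin y n ltac:(lia)) as [i0 [Hi0 Hmin]].
  destruct (argmax y n ltac:(lia)) as [i1 [Hi1 Hmax]].
  assert (HDel0 : IZR (y i1 - y i0) <= Delta).
  { apply HDub. exists i1, i0. split; auto. split; auto. rewrite Rabs_right; auto.
    apply Rle_ge, IZR_le. specialize (Hmin i1 Hi1). lia. }
  assert (Hyd : (0 <= y i1 - y i0)%Z) by (specialize (Hmin i1 Hi1); lia).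
  set (Rn := Z.to_nat (y i1 - y i0)).
  assert (HRn : INR Rn = IZR (y i1 - y i0)) by (unfold Rn; rewrite INR_IZR_INZ, Z2Nat.id; auto).
  set (RHS := PI * sqrt (N * Delta + N / delta) * sqrt (P + 2) * sqrt supA * Na).
  assert (HDel : 0 <= Delta) by (apply Rle_trans with (2 := HDel0); apply IZR_le; lia).
  assert (HA1 : 0 <= N * Delta + N / delta).
  { apply Rplus_le_le_0_compat; [apply Rmult_le_pos; auto|]. apply Rle_mult_inv_pos; auto. }
  assert (HRHS2 : RHS ^ 2 = PI ^ 2 * (N * Delta + N / delta) * (P + 2) * supA * Na ^ 2).
  { unfold RHS. replace ((PI * sqrt (N * Delta + N / delta) * sqrt (P + 2) * sqrt supA * Na) ^ 2)
      with (PI ^ 2 * (sqrt (N * Delta + N / delta)) ^ 2 * (sqrt (P + 2)) ^ 2 * (sqrt supA) ^ 2 * Na ^ 2) by ring.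
    rewrite !pow2_sqrt by lra. ring. }
  assert (HRHS0 : 0 <= RHS).
  { unfold RHS. apply Rmult_le_pos; auto. apply Rmult_le_pos; [|apply sqrt_pos].
    apply Rmult_le_pos; [|apply sqrt_pos]. apply Rmult_le_pos; [lra|apply sqrt_pos]. }
  apply sq_le; auto. rewrite HRHS2.
  assert (HPI2 : 9 <= PI ^ 2) by nra.
  destruct (Nat.eq_dec Rn 0) as [HR0|HR0].
  {
    assert (Hyeq : forall i, (i < n)%nat -> y i = y i0).
    { intros i Hi. specialize (Hmin i Hi). specialize (Hmax i Hi). unfold Rn in HR0. lia. }
    set (C := Cnorm2 (CsumL (seq 0 n) a)).
    assert (HLC : LHS = N * C).
    { unfold LHS. rewrite (RsumL_ext X _ (fun _ => C)). rewrite RsumL_const; auto.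
      intros x _. unfold Sf, Csum.
      change (fold_right (fun i acc => Cadd (Cmul (a i) (e (x * IZR (y i)))) acc) C0 (seq 0 n))
        with (CsumL (seq 0 n) (fun i => Cmul (a i) (e (x * IZR (y i))))).
      rewrite (CsumL_ext _ _ (fun i => Cmul (a i) (e (x * IZR (y i0))))).
      - rewrite <- Cmul_CsumL_l. rewrite Cnorm2_mul, e_norm. unfold C. ring.
      - intros i Hi. apply in_seq in Hi. rewrite Hyeq by lia. auto. }
    assert (HC : C <= INR n * Na).
    { unfold C, Na. rewrite norm2_eq. pose proof (Cnorm2_CsumL_le (seq 0 n) a). rewrite length_seq in H.
      exact H. }
    assert (HC0 : 0 <= C) by apply Cnorm2_nonneg.
    assert (HsAn : INR n ^ 2 <= supA).
    { eapply Rle_trans; [|apply (HA (2 * y i0)%Z)]. right. unfold A_Y.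
      rewrite filter_all.
      - rewrite length_prod, length_seq, mult_INR. ring.
      - intros [i j] Hp. apply in_prod_iff in Hp. destruct Hp as [Hi Hj]. apply in_seq in Hi, Hj.
        cbn [fst snd]. rewrite (Hyeq i), (Hyeq j) by lia. apply Z.eqb_eq. lia. }
    assert (HNb : N <= 2 * P / delta + 1) by (apply count_points; auto).
    assert (HNb2 : N * delta <= 9 * (P + 2)).
    { assert (N * delta <= 2 * P + delta).
      { apply Rmult_le_compat_r with (r := delta) in HNb; [|lra].
        replace ((2 * P / delta + 1) * delta) with (2 * P + delta) in HNb by (field; lra). lra. }
      lra. }
    rewrite HLC.
    assert (HnN : 0 <= INR n) by apply pos_INR.
    assert (E1 : (N * C) ^ 2 <= N ^ 2 * (INR n * Na) ^ 2).
    { replace ((N * C) ^ 2) with (N ^ 2 * C ^ 2) by ring. apply Rmult_le_compat_l; [nra|].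
      apply pow_incr; auto. }
    eapply Rle_trans; [apply E1|].
    assert (E2 : N ^ 2 * (INR n * Na) ^ 2 <= 9 * (N / delta) * (P + 2) * (INR n ^ 2) * Na ^ 2).
    { replace (N ^ 2 * (INR n * Na) ^ 2) with ((N * delta) * (N / delta) * (INR n ^ 2 * Na ^ 2))
        by (field; lra).
      replace (9 * (N / delta) * (P + 2) * (INR n ^ 2) * Na ^ 2) with ((9 * (P + 2)) * (N / delta) * (INR n ^ 2 * Na ^ 2)) by ring.
      apply Rmult_le_compat_r; [nra|]. apply Rmult_le_compat_r; auto.
      apply Rle_mult_inv_pos; auto. }
    eapply Rle_trans; [apply E2|].
    assert (0 <= N / delta) by (apply Rle_mult_inv_pos; auto).
    assert (N / delta <= N * Delta + N / delta) by nra.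
    assert (0 <= Na ^ 2) by nra. assert (0 <= INR n ^ 2) by nra.
    replace (9 * (N / delta) * (P + 2) * INR n ^ 2 * Na ^ 2) with ((9 * (N / delta) * INR n ^ 2) * ((P + 2) * Na ^ 2)) by ring.
    replace (PI ^ 2 * (N * Delta + N / delta) * (P + 2) * supA * Na ^ 2)
      with ((PI ^ 2 * (N * Delta + N / delta) * supA) * ((P + 2) * Na ^ 2)) by ring.
    apply Rmult_le_compat_r; [apply Rmult_le_pos; lra|].
    apply Rmult_le_compat; try lra. apply Rmult_le_compat; lra. }
  set (H := Z.to_nat (up (2 / delta))).
  assert (Hup := archimed (2 / delta)).
  assert (H2d : 0 < 2 / delta) by (apply Rdiv_lt_0_compat; lra).
  assert (HupZ : (1 <= up (2 / delta))%Z).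
  { assert (0 < IZR (up (2 / delta))) by lra. apply lt_IZR in H0. lia. }
  assert (HHI : INR H = IZR (up (2 / delta))) by (unfold H; rewrite INR_IZR_INZ, Z2Nat.id; auto; lia).
  assert (HH1 : (1 <= H)%nat) by (unfold H; lia).
  assert (HQ := key_Q delta P supA X n y a (2 * y i0)%Z Rn H Hd HP Hnd Hsp HX).
  specialize (HQ ltac:(intros i j Hi Hj; pose proof (Hmin i Hi); pose proof (Hmin j Hj);
                        pose proof (Hmax i Hi); pose proof (Hmax j Hj); unfold Rn; lia) HA HsA HH1).
  fold Na in HQ.
  set (Q := RsumL X (fun x => Cnorm2 (Uf n a y x))) in HQ.
  assert (HLQ : LHS ^ 2 <= N * Q).
  { pose proof (RsumL_CS X (fun _ => 1) (fun x => Cnorm2 (Sf n a y x))) as HCS. cbv beta in HCS.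
    rewrite (RsumL_ext X (fun x => 1 * Cnorm2 (Sf n a y x)) (fun x => Cnorm2 (Sf n a y x))) in HCS by (intros; ring).
    rewrite RsumL_const in HCS. replace (1 ^ 2) with 1 in HCS by ring. rewrite Rmult_1_r in HCS.
    rewrite (RsumL_ext X (fun x => Cnorm2 (Sf n a y x) ^ 2) (fun x => Cnorm2 (Uf n a y x))) in HCS.
    - exact HCS.
    - intros. unfold Uf. rewrite Cnorm2_mul. ring. }
  set (Lam := (2 * P + 2) * (INR (2 * Rn + H) + 48 / (11 * delta ^ 2) / INR H)) in HQ.
  assert (HRn1 : 1 <= INR Rn) by (apply (le_INR 1); lia).
  assert (HLam : Lam <= PI ^ 2 * (Delta + 1 / delta) * (P + 2)).
  { unfold Lam. rewrite plus_INR, mult_INR. simpl (INR 2). rewrite HHI.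
    set (u := 1 / delta). assert (Hu : 0 < u) by (unfold u; apply Rdiv_lt_0_compat; lra).
    assert (E2d : 2 / delta = 2 * u) by (unfold u; field; lra).
    rewrite E2d in Hup.
    assert (E48 : 48 / (11 * delta ^ 2) / IZR (up (2 / delta)) <= 24 / 11 * u).
    { rewrite E2d. apply Rmult_le_reg_r with (IZR (up (2 * u))); [lra|].
      unfold Rdiv at 1. rewrite Rmult_assoc, Rinv_l by lra. rewrite Rmult_1_r.
      replace (48 / (11 * delta ^ 2)) with (24 / 11 * u * (2 * u)) by (unfold u; field; lra).
      apply Rmult_le_compat_l; [|lra]. apply Rmult_le_pos; lra. }
    assert (HRD : INR Rn <= Delta) by (rewrite HRn; auto).
    rewrite E2d in E48 |- *.
    apply Rle_trans with ((2 * P + 2) * (3 * INR Rn + 46 / 11 * u)).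
    - apply Rmult_le_compat_l; [lra|]. lra.
    - apply Rle_trans with (9 * (Delta + u) * (P + 2)).
      + nra.
      + apply Rmult_le_compat_r; [lra|]. apply Rmult_le_compat_r; lra. }
  assert (HQ0 : 0 <= Q) by (apply RsumL_nonneg; intros; apply Cnorm2_nonneg).
  eapply Rle_trans; [apply HLQ|].
  apply Rle_trans with (N * (Na ^ 2 * supA * Lam)).
  { apply Rmult_le_compat_l; auto. }
  replace (PI ^ 2 * (N * Delta + N / delta) * (P + 2) * supA * Na ^ 2)
    with (N * (Na ^ 2 * supA * (PI ^ 2 * (Delta + 1 / delta) * (P + 2)))) by (field; lra).
  apply Rmult_le_compat_l; auto. apply Rmult_le_compat_l; [apply Rmult_le_pos; nra|]. auto.
Qed.
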